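(* Let $G\in\mathfrak{Y}_n$ be an infinite finitely generated soluble group, let $F$ be its Fitting subgroup, and suppose the Hirsch length $h(F)$ of $F$ equals $1$. Then $G$ is abelian.
   Context: $\mathfrak{Y}_n$ denotes the class of all groups $G$ (finite or infinite) such that $N_G(A)=A$ for every non-abelian subgroup $A\le G$. The Fitting subgroup is the subgroup generated by all nilpotent normal subgroups; for a finitely generated soluble group in $\mathfrak{Y}_n$ it is polycyclic, and $h(F)$ denotes its Hirsch length (the number of infinite cyclic factors in a polycyclic series). *)

(* Defs.v *)
From Stdlib Require Import List Arith.

Record Group := {
  carrier :> Type;
  gmul : carrier -> carrier -> carrier;
  gone : carrier;
  ginv : carrier -> carrier;
  gmulA : forall x y z, gmul x (gmul y z) = gmul (gmul x y) z;
  gmul1l : forall x, gmul gone x = x;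
  gmulVl : forall x, gmul (ginv x) x = gone
}.

Arguments gmul {g}.
Arguments gone {g}.
Arguments ginv {g}.

Section GroupDefs.
Variable G : Group.

Definition subset := G -> Prop.

Definition is_subgroup (H : subset) : Prop :=
  H gone /\ (forall x y, H x -> H y -> H (gmul x y)) /\ (forall x, H x -> H (ginv x)).

Definition gen (S : subset) : subset :=
  fun x => forall H : subset, is_subgroup H -> (forall y, S y -> H y) -> H x.

Definition conj (x g : G) : G := gmul (ginv g) (gmul x g).

Definition comm (x y : G) : G := gmul (gmul (ginv x) (ginv y)) (gmul x y).

Definition commg (A B : subset) : subset :=
  gen (fun z => exists a b, A a /\ B b /\ z = comm a b).

Definition trivial (A : subset) : Prop := forall x, A x -> x = gone.

Definition normalizer (A : subset) : subset :=
  fun g => forall x, A x <-> A (conj x g).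

Definition is_abelian (A : subset) : Prop :=
  forall x y, A x -> A y -> gmul x y = gmul y x.

Definition normal_in (N K : subset) : Prop :=
  is_subgroup N /\ (forall x, N x -> K x) /\
  (forall x g, N x -> K g -> N (conj x g)).

(* lower central series of a subgroup N: gamma_1 = N, gamma_{i+1} = [gamma_i, N] *)
Fixpoint lcs (N : subset) (n : nat) : subset :=
  match n with
  | O => N
  | S k => commg (lcs N k) N
  end.

Definition is_nilpotent (N : subset) : Prop :=
  exists c, trivial (lcs N c).

Fixpoint derived (n : nat) : subset :=
  match n with
  | O => fun _ => True
  | S k => commg (derived k) (derived k)
  end.

Definition soluble : Prop := exists n, trivial (derived n).

Definition fin_generated : Prop :=
  exists l : list G, forall g, gen (fun x => In x l) g.

Definition infinite_group : Prop :=
  forall l : list G, exists g, ~ In g l.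

Definition full_group_abelian : Prop := forall x y : G, gmul x y = gmul y x.

Definition in_Yn : Prop :=
  forall A : subset, is_subgroup A -> ~ is_abelian A ->
    forall g, normalizer A g <-> A g.

Definition fitting : subset :=
  gen (fun x => exists N, normal_in N (fun _ => True) /\ is_nilpotent N /\ N x).

Fixpoint gpow (t : G) (n : nat) : G :=
  match n with O => gone | S k => gmul t (gpow t k) end.

Definition cyclic_quotient (K N : subset) : Prop :=
  exists t, K t /\ forall h, K h ->
    exists n, N (gmul (gpow t n) h) \/ N (gmul (gpow (ginv t) n) h).

(* K / N is infinite: no finite set of elements of K meets every coset of N *)
Definition infinite_quotient (K N : subset) : Prop :=
  forall l : list G, (forall x, In x l -> K x) ->
    exists h, K h /\ forall x, In x l -> ~ N (gmul (ginv x) h).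

(* F has a polycyclic series F = H_0 |> H_1 |> ... |> H_m = 1 with cyclic
   factors, exactly one of which is infinite; i.e. F is polycyclic with
   Hirsch length h(F) = 1 (Hirsch length is an invariant). *)
Definition hirsch_length_one (F : subset) : Prop :=
  exists (H : nat -> subset) (m : nat),
    (forall x, H 0 x <-> F x) /\
    (forall x, H m x <-> x = gone) /\
    (forall i, i < m ->
       is_subgroup (H i) /\ normal_in (H (S i)) (H i) /\
       cyclic_quotient (H i) (H (S i))) /\
    (exists j, j < m /\ infinite_quotient (H j) (H (S j)) /\
       forall i, i < m -> i <> j -> ~ infinite_quotient (H i) (H (S i))).

End GroupDefs.

(* Main.v *)
Require Import Defs.
From Stdlib Require Import ZArith Lia List Classical Arith.
Open Scope Z_scope.
Local Infix "**" := gmul (at level 40, left associativity).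


Section Basics.
Lemma gmulVr {G : Group} (x : G) : x ** ginv x = gone.
Proof.
  rewrite <- (gmul1l _ (x ** ginv x)).
  rewrite <- (gmulVl _ (ginv x)) at 1.
  rewrite <- gmulA. rewrite (gmulA _ (ginv x) x (ginv x)). rewrite gmulVl, gmul1l.
  apply gmulVl.
Qed.
Lemma gmul1r {G : Group} (x : G) : x ** gone = x.
Proof. rewrite <- (gmulVl _ x), gmulA, gmulVr, gmul1l; reflexivity. Qed.
Lemma gKl {G : Group} (x y : G) : ginv x ** (x ** y) = y.
Proof. rewrite gmulA, gmulVl, gmul1l; reflexivity. Qed.
Lemma gKr {G : Group} (x y : G) : x ** (ginv x ** y) = y.
Proof. rewrite gmulA, gmulVr, gmul1l; reflexivity. Qed.
Lemma ginv_uniq {G : Group} (x y : G) : x ** y = gone -> y = ginv x.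
Proof. intros H. rewrite <- (gKl x y), H, gmul1r. reflexivity. Qed.
Lemma ginvK {G : Group} (x : G) : ginv (ginv x) = x.
Proof. symmetry. apply ginv_uniq. apply gmulVl. Qed.
Lemma ginvM {G : Group} (x y : G) : ginv (x ** y) = ginv y ** ginv x.
Proof. symmetry. apply ginv_uniq. rewrite <- !gmulA, (gKr y), gmulVr. reflexivity. Qed.
Lemma ginv1 {G : Group} : ginv (@gone G) = gone.
Proof. symmetry; apply ginv_uniq; apply gmul1l. Qed.
Lemma gcancl {G : Group} (a x y : G) : a ** x = a ** y -> x = y.
Proof. intros H. rewrite <- (gKl a x), H, gKl. reflexivity. Qed.
Lemma gcancr {G : Group} (a x y : G) : x ** a = y ** a -> x = y.
Proof. intros H. rewrite <- (gmul1r x), <- (gmulVr a), gmulA, H, <- gmulA, gmulVr, gmul1r. reflexivity. Qed.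
Lemma ginv_inj {G : Group} (x y : G) : ginv x = ginv y -> x = y.
Proof. intros H. rewrite <- (ginvK x), H, ginvK. reflexivity. Qed.
Lemma gdiv_eq1 {G : Group} (x y : G) : ginv x ** y = gone -> x = y.
Proof. intros H. rewrite <- (gKr x y), H, gmul1r. reflexivity. Qed.
End Basics.

Definition zpow {G : Group} (x : G) (k : Z) : G :=
  if (0 <=? k) then gpow G x (Z.to_nat k) else gpow G (ginv x) (Z.to_nat (- k)).

Lemma gpow_S_r {G : Group} (x : G) (n : nat) : gpow G x (S n) = gpow G x n ** x.
Proof.
  induction n; simpl. rewrite gmul1r, gmul1l; reflexivity.
  simpl in IHn. rewrite <- (gmulA _ x (gpow G x n) x), <- IHn. reflexivity.
Qed.

Lemma zpow0 {G : Group} (x : G) : zpow x 0 = gone.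
Proof. reflexivity. Qed.

Lemma zpow_succ {G : Group} (x : G) (k : Z) : zpow x (Z.succ k) = zpow x k ** x.
Proof.
  unfold zpow. destruct (Z.leb_spec 0 k) as [Hk|Hk].
  - destruct (Z.leb_spec 0 (Z.succ k)); [|lia].
    replace (Z.to_nat (Z.succ k)) with (S (Z.to_nat k)) by lia.
    apply gpow_S_r.
  - destruct (Z.leb_spec 0 (Z.succ k)).
    + assert (k = -1) by lia. subst. simpl. rewrite gmul1r, gmulVl. reflexivity.
    + replace (Z.to_nat (- k)) with (S (Z.to_nat (- Z.succ k))) by lia.
      rewrite gpow_S_r, <- gmulA, gmulVl, gmul1r. reflexivity.
Qed.

Lemma zpow_pred {G : Group} (x : G) (k : Z) : zpow x (Z.pred k) = zpow x k ** ginv x.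
Proof.
  rewrite <- (Z.succ_pred k) at 2. rewrite zpow_succ, <- gmulA, gmulVr, gmul1r. reflexivity.
Qed.

Lemma zpow_add {G : Group} (x : G) (a b : Z) : zpow x (a + b) = zpow x a ** zpow x b.
Proof.
  revert a. induction b using Z.peano_ind; intros a.
  - rewrite Z.add_0_r, zpow0, gmul1r. reflexivity.
  - rewrite Z.add_succ_r, !zpow_succ, IHb, gmulA. reflexivity.
  - rewrite Z.add_pred_r, !zpow_pred, IHb, gmulA. reflexivity.
Qed.

Lemma zpow1 {G : Group} (x : G) : zpow x 1 = x.
Proof. unfold zpow. simpl. apply gmul1r. Qed.

Lemma zpow_opp {G : Group} (x : G) (a : Z) : zpow x (- a) = ginv (zpow x a).
Proof. apply ginv_uniq. rewrite <- zpow_add. replace (a + - a) with 0 by lia. reflexivity. Qed.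

Lemma zpow_m1 {G : Group} (x : G) : zpow x (-1) = ginv x.
Proof. unfold zpow. simpl. apply gmul1r. Qed.

Lemma zpow_mul {G : Group} (x : G) (a b : Z) : zpow x (a * b) = zpow (zpow x a) b.
Proof.
  induction b using Z.peano_ind.
  - rewrite Z.mul_0_r. reflexivity.
  - rewrite Z.mul_succ_r, zpow_add, zpow_succ, IHb. reflexivity.
  - rewrite Z.mul_pred_r, zpow_pred, <- IHb.
    unfold Z.sub. rewrite zpow_add, zpow_opp. reflexivity.
Qed.

Lemma zpow_one {G : Group} (k : Z) : zpow (@gone G) k = gone.
Proof.
  induction k using Z.peano_ind. reflexivity.
  rewrite zpow_succ, IHk, gmul1l. reflexivity.
  rewrite zpow_pred, IHk, ginv1, gmul1l. reflexivity.
Qed.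

Lemma gpow_zpow {G : Group} (x : G) (n : nat) : gpow G x n = zpow x (Z.of_nat n).
Proof. unfold zpow. destruct (Z.leb_spec 0 (Z.of_nat n)); [|lia]. rewrite Nat2Z.id. reflexivity. Qed.

Lemma zpow_comm_self {G : Group} (x : G) (a b : Z) : zpow x a ** zpow x b = zpow x b ** zpow x a.
Proof. rewrite <- !zpow_add, Z.add_comm. reflexivity. Qed.

Definition commute {G : Group} (x y : G) := x ** y = y ** x.

Lemma commute_inv {G : Group} (x y : G) : commute x y -> commute x (ginv y).
Proof.
  unfold commute; intros H. apply (gcancl y). rewrite gmulA, <- H, <- gmulA, gmulVr, gKr, gmul1r. reflexivity.
Qed.

Lemma commute_sym {G : Group} (x y : G) : commute x y -> commute y x.
Proof. unfold commute; auto. Qed.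

Lemma commute_mul {G : Group} (x y z : G) : commute x y -> commute x z -> commute x (y ** z).
Proof. unfold commute; intros H1 H2. rewrite gmulA, H1, <- gmulA, H2, gmulA. reflexivity. Qed.

Lemma commute_zpow {G : Group} (x y : G) (k : Z) : commute x y -> commute x (zpow y k).
Proof.
  intros H. induction k using Z.peano_ind.
  - unfold commute. rewrite zpow0, gmul1r, gmul1l. reflexivity.
  - rewrite zpow_succ. apply commute_mul; auto.
  - rewrite zpow_pred. apply commute_mul; auto. apply commute_inv; auto.
Qed.

Lemma commute_zpow2 {G : Group} (x y : G) (a b : Z) : commute x y -> commute (zpow x a) (zpow y b).
Proof. intros H. apply commute_zpow, commute_sym, commute_zpow, commute_sym, H. Qed.

Lemma zpow_mulC {G : Group} (x y : G) (k : Z) : commute x y -> zpow (x ** y) k = zpow x k ** zpow y k.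
Proof.
  intros H. induction k using Z.peano_ind.
  - rewrite !zpow0, gmul1l. reflexivity.
  - rewrite !zpow_succ, IHk.
    assert (commute (zpow y k) x) by (apply commute_sym, commute_zpow, H).
    unfold commute in H0. rewrite <- !gmulA. f_equal. rewrite !gmulA. rewrite H0. reflexivity.
  - rewrite !zpow_pred, IHk, ginvM.
    assert (Hc : commute (ginv x) (zpow y k ** ginv y)).
    { apply commute_mul. apply commute_sym, commute_inv, commute_sym, commute_zpow, H.
      apply commute_sym, commute_inv, commute_sym, commute_inv, H. }
    unfold commute in Hc. rewrite <- !gmulA. f_equal. rewrite Hc, gmulA. reflexivity.
Qed.

Lemma conj_def {G : Group} (x g : G) : conj G x g = ginv g ** (x ** g).
Proof. reflexivity. Qed.
Lemma comm_def {G : Group} (x y : G) : comm G x y = ginv x ** ginv y ** (x ** y).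
Proof. reflexivity. Qed.

Lemma conj_mul {G : Group} (x y g : G) : conj G (x ** y) g = conj G x g ** conj G y g.
Proof. rewrite !conj_def, <- !gmulA, gKr. reflexivity. Qed.
Lemma conj_1 {G : Group} (g : G) : conj G gone g = gone.
Proof. rewrite conj_def, gmul1l, gmulVl. reflexivity. Qed.
Lemma conj_inv {G : Group} (x g : G) : conj G (ginv x) g = ginv (conj G x g).
Proof. apply ginv_uniq. rewrite <- conj_mul, gmulVr, conj_1. reflexivity. Qed.
Lemma conj_zpow {G : Group} (x g : G) k : conj G (zpow x k) g = zpow (conj G x g) k.
Proof.
  induction k using Z.peano_ind.
  - apply conj_1.
  - rewrite !zpow_succ, conj_mul, IHk. reflexivity.
  - rewrite !zpow_pred, conj_mul, IHk, conj_inv. reflexivity.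
Qed.
Lemma conj_conj {G : Group} (x a b : G) : conj G (conj G x a) b = conj G x (a ** b).
Proof. rewrite !conj_def, ginvM, <- !gmulA. reflexivity. Qed.
Lemma conj_g1 {G : Group} (x : G) : conj G x gone = x.
Proof. rewrite conj_def, ginv1, gmul1l, gmul1r. reflexivity. Qed.
Lemma conjK {G : Group} (x g : G) : conj G (conj G x g) (ginv g) = x.
Proof. rewrite conj_conj, gmulVr, conj_g1. reflexivity. Qed.
Lemma conjKV {G : Group} (x g : G) : conj G (conj G x (ginv g)) g = x.
Proof. rewrite conj_conj, gmulVl, conj_g1. reflexivity. Qed.
Lemma conj_eq_comm {G : Group} (x g : G) : conj G x g = x ** comm G x g.
Proof. rewrite conj_def, comm_def, <- !gmulA, gKr. reflexivity. Qed.
Lemma comm_conj {G : Group} (a b g : G) : conj G (comm G a b) g = comm G (conj G a g) (conj G b g).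
Proof. rewrite comm_def, !conj_mul, !conj_inv, comm_def. reflexivity. Qed.
Lemma comm_eq1 {G : Group} (x y : G) : comm G x y = gone <-> commute x y.
Proof.
  unfold commute. rewrite comm_def. split; intros H.
  - rewrite <- ginvM in H. apply gdiv_eq1 in H. auto.
  - rewrite H, <- gmulA, (gKl y), gmulVl. reflexivity.
Qed.
Lemma conj_commute {G : Group} (x g : G) : commute x g -> conj G x g = x.
Proof. unfold commute. intros H. rewrite conj_def, H, gKl. reflexivity. Qed.
Lemma conj_eq_commute {G : Group} (x g : G) : conj G x g = x -> commute x g.
Proof. unfold commute. rewrite conj_def. intros H. rewrite <- H at 2. rewrite gKr. reflexivity. Qed.
Lemma comm_sym {G : Group} (x y : G) : comm G y x = ginv (comm G x y).
Proof. apply ginv_uniq. rewrite !comm_def, <- !gmulA, (gKr y), (gKr x), (gKl y), gmulVl. reflexivity. Qed.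
Lemma comm_mul_r {G : Group} (a b c : G) : comm G a (b ** c) = comm G a c ** conj G (comm G a b) c.
Proof.
  rewrite !comm_def, conj_def, !ginvM, <- !gmulA, (gKr c), (gKr a). reflexivity.
Qed.
Lemma comm_mul_l {G : Group} (a b c : G) : comm G (a ** b) c = conj G (comm G a c) b ** comm G b c.
Proof.
  rewrite !comm_def, conj_def, !ginvM, <- !gmulA, (gKr b), (gKr c). reflexivity.
Qed.
Lemma mul_comm_eq {G : Group} (a b : G) : a ** b = b ** a ** comm G a b.
Proof. rewrite comm_def, <- !gmulA, (gKr a), gKr. reflexivity. Qed.
Lemma comm_1l {G : Group} (a : G) : comm G gone a = gone.
Proof. apply comm_eq1. unfold commute. rewrite gmul1l, gmul1r. reflexivity. Qed.
Lemma comm_1r {G : Group} (a : G) : comm G a gone = gone.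
Proof. apply comm_eq1. unfold commute. rewrite gmul1l, gmul1r. reflexivity. Qed.

Lemma sub_1 {G : Group} (H : subset G) : is_subgroup G H -> H gone.
Proof. intros [h _]; auto. Qed.
Lemma sub_mul {G : Group} (H : subset G) x y : is_subgroup G H -> H x -> H y -> H (x ** y).
Proof. intros [_ [h _]]; auto. Qed.
Lemma sub_inv {G : Group} (H : subset G) x : is_subgroup G H -> H x -> H (ginv x).
Proof. intros [_ [_ h]]; auto. Qed.
Lemma sub_zpow {G : Group} (H : subset G) x k : is_subgroup G H -> H x -> H (zpow x k).
Proof.
  intros Hs Hx. induction k using Z.peano_ind.
  - rewrite zpow0. apply sub_1; auto.
  - rewrite zpow_succ. apply sub_mul; auto.
  - rewrite zpow_pred. apply sub_mul; auto. apply sub_inv; auto.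
Qed.
Lemma sub_inv_iff {G : Group} (H : subset G) x : is_subgroup G H -> H (ginv x) -> H x.
Proof. intros Hs Hx. rewrite <- (ginvK x). apply sub_inv; auto. Qed.

Lemma gen_sub {G : Group} (S : subset G) : is_subgroup G (gen G S).
Proof.
  unfold gen. split; [|split].
  - intros H Hs _. apply sub_1; auto.
  - intros x y Hx Hy H Hs HS. apply sub_mul; [exact Hs | apply Hx | apply Hy]; auto.
  - intros x Hx H Hs HS. apply sub_inv; [exact Hs | apply Hx]; auto.
Qed.
Lemma gen_in {G : Group} (S : subset G) x : S x -> gen G S x.
Proof. unfold gen. auto. Qed.
Lemma gen_min {G : Group} (S H : subset G) : is_subgroup G H -> (forall y, S y -> H y) -> forall x, gen G S x -> H x.
Proof. unfold gen. intros Hs HS x Hx. apply Hx; auto. Qed.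

Lemma norm_of {G : Group} (H : subset G) g :
  (forall x, H x -> H (conj G x g)) -> (forall x, H x -> H (conj G x (ginv g))) -> normalizer G H g.
Proof.
  intros H1 H2 x. split; auto. intros Hx. rewrite <- (conjK x g). auto.
Qed.

Lemma Yuse {G : Group} (H : subset G) g : in_Yn G -> is_subgroup G H ->
  (exists a b, H a /\ H b /\ ~ commute a b) ->
  (forall x, H x -> H (conj G x g)) -> (forall x, H x -> H (conj G x (ginv g))) -> H g.
Proof.
  intros HY Hs [a [b [Ha [Hb Hab]]]] H1 H2.
  apply (HY H Hs); [|apply norm_of; auto].
  intros Hab'. apply Hab. apply Hab'; auto.
Qed.

Lemma Pnormal {G : Group} (N : subset G) : in_Yn G -> is_subgroup G N ->
  (forall x g, N x -> N (conj G x g)) -> ~ is_abelian G N -> forall g, N g.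
Proof.
  intros HY Hs Hn Hna g. apply (HY N Hs Hna). apply norm_of; auto.
Qed.

Definition central {G : Group} (a : G) := forall w : G, commute a w.

Lemma central_sub {G : Group} : is_subgroup G (fun a => central a).
Proof.
  unfold central. split; [|split].
  - intros w. unfold commute. rewrite gmul1l, gmul1r. reflexivity.
  - intros x y Hx Hy w. apply commute_sym, commute_mul; apply commute_sym; auto.
  - intros x Hx w. apply commute_sym, commute_inv, commute_sym; auto.
Qed.

Lemma centralizer_sub {G : Group} (a : G) : is_subgroup G (fun w => commute a w).
Proof.
  split; [|split].
  - unfold commute. rewrite gmul1l, gmul1r. reflexivity.
  - intros. apply commute_mul; auto.
  - intros. apply commute_inv; auto.
Qed.

Definition torsion {G : Group} (x : G) := exists r, r <> 0 /\ zpow x r = gone.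
Definition inford {G : Group} (x : G) := forall r, r <> 0 -> zpow x r <> gone.

Definition Gd (G : Group) : subset G := commg G (fun _ => True) (fun _ => True).

Lemma Gd_comm {G : Group} (a b : G) : Gd G (comm G a b).
Proof. apply gen_in. exists a, b. auto. Qed.

Lemma zpow_ginv {G : Group} (v : G) k : zpow (ginv v) k = zpow v (- k).
Proof. rewrite <- zpow_m1, <- zpow_mul. f_equal; lia. Qed.

Lemma zpow_eq {G : Group} (v : G) a b : zpow v a = zpow v b -> zpow v (a - b) = gone.
Proof. intros H. unfold Z.sub. rewrite zpow_add, H, zpow_opp, gmulVr. reflexivity. Qed.

Lemma inford_eq {G : Group} (v : G) a b : inford v -> zpow v a = zpow v b -> a = b.
Proof. intros Hv H. apply zpow_eq in H. destruct (Z.eq_dec a b); auto. exfalso; apply (Hv (a - b)); auto; lia. Qed.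

Lemma conj_swap {G : Group} (x a : G) : conj G x a = ginv a ** conj G a (ginv x) ** x.
Proof. rewrite !conj_def, ginvK, <- !gmulA, gmulVl, gmul1r. reflexivity. Qed.

Lemma commute_zpow_self {G : Group} (x : G) a : commute (zpow x a) x.
Proof. unfold commute. rewrite <- (zpow1 x) at 2 3. apply zpow_comm_self. Qed.
Lemma commute_self_zpow {G : Group} (x : G) a : commute x (zpow x a).
Proof. apply commute_sym, commute_zpow_self. Qed.

Definition MG {G : Group} (M : subset G) (h : G) : subset G :=
  fun w => exists m k, M m /\ w = m ** zpow h k.

Lemma conj_zpow_inv {G : Group} (M : subset G) (h : G) :
  (forall m, M m -> M (conj G m h) /\ M (conj G m (ginv h))) ->
  forall k m, M m -> M (conj G m (zpow h k)).
Proof.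
  intros HM k. induction k using Z.peano_ind; intros m Hm.
  - rewrite zpow0, conj_g1. auto.
  - rewrite zpow_succ, <- conj_conj. apply HM. auto.
  - rewrite zpow_pred, <- conj_conj. apply HM. auto.
Qed.

Lemma MG_sub {G : Group} (M : subset G) (h : G) : is_subgroup G M ->
  (forall m, M m -> M (conj G m h) /\ M (conj G m (ginv h))) -> is_subgroup G (MG M h).
Proof.
  intros Hs HM. pose proof (conj_zpow_inv M h HM) as HC. split; [|split].
  - exists gone, 0. split. apply sub_1; auto. rewrite zpow0, gmul1l. reflexivity.
  - intros x y [m [k [Hm ->]]] [m' [l [Hm' ->]]].
    exists (m ** conj G m' (zpow h (- k))), (k + l). split.
    + apply sub_mul; auto.
    + rewrite conj_def, zpow_opp, ginvK, zpow_add, <- !gmulA, gKl. reflexivity.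
  - intros x [m [k [Hm ->]]]. exists (conj G (ginv m) (zpow h k)), (- k). split.
    + apply HC. apply sub_inv; auto.
    + rewrite conj_def, zpow_opp, ginvM, <- !gmulA, gmulVr, gmul1r. reflexivity.
Qed.

Lemma MG_in {G : Group} (M : subset G) (h m : G) k : M m -> MG M h (m ** zpow h k).
Proof. intros. exists m, k. auto. Qed.

Lemma conj_MG {G : Group} (m g a : G) k : commute m a ->
  conj G (m ** zpow g k) a = m ** (ginv a ** conj G a (zpow g (- k))) ** zpow g k.
Proof.
  intros Hm. rewrite conj_mul, (conj_commute m a Hm), (conj_swap (zpow g k) a), <- zpow_opp.
  rewrite <- !gmulA. reflexivity.
Qed.

Lemma L1 {G : Group} (g v : G) : in_Yn G -> conj G v g = ginv v -> inford v -> False.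
Proof.
  intros HY Hg Hv.
  assert (Hg' : conj G v (ginv g) = ginv v).
  { apply ginv_inj. rewrite ginvK, <- conj_inv, <- Hg, conjK. reflexivity. }
  set (M := fun w : G => exists i, w = zpow v (2 * i)).
  assert (HMs : is_subgroup G M).
  { split; [|split].
    - exists 0. reflexivity.
    - intros x y [i ->] [j ->]. exists (i + j). rewrite <- zpow_add. f_equal; lia.
    - intros x [i ->]. exists (- i). rewrite <- zpow_opp. f_equal; lia. }
  assert (HM : forall m, M m -> M (conj G m g) /\ M (conj G m (ginv g))).
  { intros m [i ->]. rewrite !conj_zpow, Hg, Hg', !zpow_ginv. split; exists (- i); f_equal; lia. }
  assert (Hk : forall k, conj G v (zpow g k) = v \/ conj G v (zpow g k) = ginv v).
  { intros k. induction k using Z.peano_ind.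
    - left. rewrite zpow0, conj_g1. reflexivity.
    - rewrite zpow_succ, <- conj_conj. destruct IHk as [-> | ->].
      + right. auto.
      + left. rewrite conj_inv, Hg, ginvK. reflexivity.
    - rewrite zpow_pred, <- conj_conj. destruct IHk as [-> | ->].
      + right. auto.
      + left. rewrite conj_inv, Hg', ginvK. reflexivity. }
  set (H := MG M g).
  assert (HHs : is_subgroup G H) by (apply MG_sub; auto).
  assert (Hin : H v).
  { apply Yuse; auto.
    - exists (zpow v 2), g. split; [|split].
      + exists (zpow v 2), 0. split. exists 1. reflexivity. rewrite zpow0, gmul1r. reflexivity.
      + exists gone, 1. split. exists 0. reflexivity. rewrite zpow1, gmul1l. reflexivity.
      + intros Hc. apply (Hv 4); [lia|]. apply conj_commute in Hc.
        rewrite conj_zpow, Hg, zpow_ginv in Hc.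
        replace 4 with (2 - -2) by lia. apply zpow_eq. symmetry; exact Hc.
    - intros x [m [k [[i ->] ->]]]. rewrite conj_MG by apply commute_zpow_self.
      destruct (Hk (- k)) as [E|E]; rewrite E.
      + rewrite gmulVl, gmul1r. apply MG_in. exists i. reflexivity.
      + apply MG_in. exists (i - 1). rewrite <- zpow_m1, <- !zpow_add. f_equal. lia.
    - intros x [m [k [[i ->] ->]]]. rewrite conj_MG by apply commute_inv, commute_zpow_self.
      rewrite conj_inv, ginvK. destruct (Hk (- k)) as [E|E]; rewrite E.
      + rewrite gmulVr, gmul1r. apply MG_in. exists i. reflexivity.
      + rewrite ginvK. apply MG_in. exists (i + 1). rewrite <- (zpow1 v) at 2 3. rewrite <- !zpow_add. f_equal. lia. }
  destruct Hin as [m [k [[i ->] Hv']]].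
  assert (Hgk : zpow g k = zpow v (- (2 * i) + 1)).
  { rewrite zpow_add, zpow_opp, zpow1. apply (gcancl (zpow v (2 * i))). rewrite gKr. symmetry. exact Hv'. }
  assert (Hc : conj G (zpow g k) g = zpow g k) by (apply conj_commute, commute_zpow_self).
  rewrite Hgk, conj_zpow, Hg, zpow_ginv in Hc. apply inford_eq in Hc; auto. lia.
Qed.

Lemma central_zpow {G : Group} (z : G) e : central z -> forall w, commute (zpow z e) w.
Proof. intros Hz w. apply commute_sym, commute_zpow, commute_sym, Hz. Qed.

Lemma ztrick1 {G : Group} (M : subset G) (g z m0 : G) : in_Yn G -> is_subgroup G M -> is_abelian G M ->
  (forall m, M m -> torsion m) -> (forall m, M m -> M (conj G m g) /\ M (conj G m (ginv g))) ->
  M m0 -> ~ commute g m0 -> central z ->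
  forall e, exists k r, k <> 0 /\ r <> 0 /\ zpow g (r * (1 - k)) = zpow z (r * (e * k)).
Proof.
  intros HY HMs HMa HMt HM Hm0 Hgm0 Hz e.
  pose proof (central_zpow z e Hz) as Hze.
  set (h := g ** zpow z e).
  assert (HMh : forall m, M m -> M (conj G m h) /\ M (conj G m (ginv h))).
  { intros m Hm. unfold h. rewrite <- conj_conj, ginvM, <- conj_conj.
    rewrite (conj_commute _ (zpow z e)) by (apply commute_sym, Hze).
    rewrite (conj_commute m (ginv (zpow z e))) by (apply commute_inv, commute_sym, Hze).
    apply HM; auto. }
  assert (Hgh : commute g h).
  { unfold h. apply commute_mul. reflexivity. apply commute_sym, Hze. }
  assert (Hin : MG M h g).
  { apply Yuse; auto.
    - apply MG_sub; auto.
    - exists m0, h. split; [|split].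
      + exists m0, 0. split; auto. rewrite zpow0, gmul1r. reflexivity.
      + exists gone, 1. split. apply sub_1; auto. rewrite zpow1, gmul1l. reflexivity.
      + intros Hc. apply Hgm0. unfold commute in *. unfold h in Hc.
        apply (gcancr (zpow z e)). rewrite <- (gmulA _ m0), Hc, <- !gmulA, (Hze m0). reflexivity.
    - intros x [m [k [Hm ->]]]. rewrite conj_mul, (conj_commute (zpow h k)).
      apply MG_in. apply HM; auto. apply commute_sym, commute_zpow; auto.
    - intros x [m [k [Hm ->]]]. rewrite conj_mul, (conj_commute (zpow h k)).
      apply MG_in. apply HM; auto. apply commute_sym, commute_zpow, commute_sym, commute_inv, commute_sym; auto. }
  destruct Hin as [m [k [Hm Hg]]].
  assert (Hhk : zpow h k = zpow g k ** zpow z (e * k)).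
  { unfold h. rewrite zpow_mulC, zpow_mul; auto. apply commute_sym, Hze. }
  destruct (Z.eq_dec k 0) as [Hk0|Hk0].
  - subst k. rewrite zpow0, gmul1r in Hg. subst m. exfalso. apply Hgm0. apply HMa; auto.
  - destruct (HMt m Hm) as [r [Hr Hmr]]. exists k, r. split; auto. split; auto.
    assert (Hm' : m = zpow g (1 - k) ** zpow z (- (e * k))).
    { apply (gcancr (zpow h k)). rewrite <- Hg, Hhk.
      assert (C1 : commute (zpow z (- (e * k))) (zpow g k)) by apply (central_zpow z _ Hz).
      unfold commute in C1.
      rewrite <- !gmulA, (gmulA _ (zpow z (- (e * k))) (zpow g k)), C1, <- !gmulA.
      rewrite <- (zpow_add z). replace (- (e * k) + e * k) with 0 by lia. rewrite zpow0, gmul1r.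
      rewrite <- zpow_add. replace (1 - k + k) with 1 by lia. rewrite zpow1. reflexivity. }
    rewrite Hm', zpow_mulC in Hmr by (apply commute_zpow2, commute_sym, Hz).
    rewrite <- !zpow_mul in Hmr.
    apply ginv_uniq in Hmr.
    replace (r * (1 - k)) with ((1 - k) * r) by lia.
    rewrite <- (ginvK (zpow g ((1 - k) * r))), <- Hmr, <- zpow_opp. f_equal. lia.
Qed.

Lemma arith1 (k1 k2 : Z) : k1 <> 1 -> k2 <> 0 -> k1 * (1 - k2) = (2 * Z.abs k1 + 1) * k2 * (1 - k1) -> False.
Proof.
  intros H1 H2 H. apply (f_equal Z.abs) in H. rewrite !Z.abs_mul in H.
  assert (Z.abs (1 - k1) >= 1) by lia.
  assert (Z.abs (1 - k2) <= 2 * Z.abs k2) by lia.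
  assert (Z.abs k2 >= 1) by lia.
  assert (Z.abs k1 >= 0) by lia.
  rewrite (Z.abs_eq (2 * Z.abs k1 + 1)) in H by lia.
  set (a := Z.abs k1) in *. set (b := Z.abs k2) in *. set (c := Z.abs (1 - k2)) in *. set (d := Z.abs (1 - k1)) in *.
  assert (X1 : 0 <= (2 * a + 1) * b * (d - 1)) by (apply Z.mul_nonneg_nonneg; [apply Z.mul_nonneg_nonneg|]; lia).
  assert (X2 : a * c <= a * (2 * b)) by (apply Z.mul_le_mono_nonneg_l; lia).
  lia.
Qed.

Lemma ztrick {G : Group} (M : subset G) (g z m0 : G) : in_Yn G -> is_subgroup G M -> is_abelian G M ->
  (forall m, M m -> torsion m) -> (forall m, M m -> M (conj G m g) /\ M (conj G m (ginv g))) ->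
  M m0 -> ~ commute g m0 -> central z -> inford z -> False.
Proof.
  intros HY HMs HMa HMt HM Hm0 Hgm0 Hz Hzi.
  pose proof (ztrick1 M g z m0 HY HMs HMa HMt HM Hm0 Hgm0 Hz) as ZT.
  destruct (ZT 1) as [k1 [r1 [Hk1 [Hr1 E1]]]].
  destruct (ZT (2 * Z.abs k1 + 1)) as [k2 [r2 [Hk2 [Hr2 E2]]]].
  assert (k1 <> 1).
  { intros ->. replace (r1 * (1 - 1)) with 0 in E1 by lia. rewrite zpow0 in E1.
    apply (Hzi (r1 * (1 * 1))); [lia | symmetry; exact E1]. }
  set (P1 := r1 * (1 - k1)) in *. set (P2 := r2 * (1 - k2)) in *.
  assert (EE : zpow z (r1 * (1 * k1) * P2) = zpow z (r2 * ((2 * Z.abs k1 + 1) * k2) * P1)).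
  { rewrite (zpow_mul z (r1 * (1 * k1)) P2), (zpow_mul z (r2 * ((2 * Z.abs k1 + 1) * k2)) P1), <- E1, <- E2, <- !zpow_mul. f_equal. lia. }
  apply inford_eq in EE; auto. unfold P1, P2 in EE.
  apply (arith1 k1 k2); auto.
  assert (r1 * r2 * (k1 * (1 - k2) - (2 * Z.abs k1 + 1) * k2 * (1 - k1)) = 0) by lia.
  apply Z.mul_eq_0 in H0. destruct H0 as [H0|H0]; [|lia]. apply Z.mul_eq_0 in H0; lia.
Qed.

Lemma pigeon : forall L (P : nat -> nat -> Prop),
  (forall i, (i <= L)%nat -> exists p, (p < L)%nat /\ P i p) ->
  exists i k p, (i < k)%nat /\ (k <= L)%nat /\ P i p /\ P k p.
Proof.
  induction L as [|L IH]; intros P HP.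
  - destruct (HP 0%nat (le_n 0)) as [p [Hp _]]. lia.
  - destruct (HP (S L) (le_n _)) as [p0 [Hp0 HP0]].
    destruct (classic (exists i, (i <= L)%nat /\ P i p0)) as [[i [Hi Hip]]|Hno].
    + exists i, (S L), p0. repeat split; auto; lia.
    + set (f := fun q => if (q <? p0)%nat then q else S q).
      destruct (IH (fun i q => P i (f q))) as [i [k [q [Hik [HkL [Hi Hk]]]]]].
      * intros i Hi. destruct (HP i ltac:(lia)) as [p [Hp Hip]].
        assert (p <> p0) by (intros ->; apply Hno; exists i; auto).
        destruct (Nat.ltb_spec p p0).
        -- exists p. split. lia. unfold f. destruct (Nat.ltb_spec p p0); [auto|lia].
        -- exists (p - 1)%nat. split. lia. unfold f. destruct (Nat.ltb_spec (p - 1) p0); [lia|].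
           replace (S (p - 1)) with p by lia. auto.
      * exists i, k, (f q). repeat split; auto; lia.
Qed.

Lemma gpow_add {G : Group} (y : G) (a b : nat) : gpow G y (a + b) = gpow G y a ** gpow G y b.
Proof. rewrite !gpow_zpow, Nat2Z.inj_add, zpow_add. reflexivity. Qed.

Lemma gpow_1 {G : Group} (y : G) : gpow G y 1 = y.
Proof. simpl. apply gmul1r. Qed.

Lemma gpow_mul {G : Group} (y : G) (a b : nat) : gpow G (gpow G y a) b = gpow G y (a * b).
Proof. rewrite !gpow_zpow, Nat2Z.inj_mul, zpow_mul. reflexivity. Qed.

Lemma fin_pow {G : Group} (K N : subset G) : is_subgroup G K -> is_subgroup G N ->
  ~ infinite_quotient G K N -> forall y, K y -> exists n, (n >= 1)%nat /\ N (gpow G y n).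
Proof.
  intros HK HN Hfin y Hy.
  unfold infinite_quotient in Hfin.
  apply not_all_ex_not in Hfin. destruct Hfin as [l Hl].
  apply imply_to_and in Hl. destruct Hl as [HlK Hl].
  assert (Hcov : forall h, K h -> exists x, In x l /\ N (gmul (ginv x) h)).
  { intros h Hh. apply NNPP. intros Hno. apply Hl. exists h. split; auto.
    intros x Hx HN'. apply Hno. exists x. auto. }
  destruct (pigeon (length l) (fun i p => N (ginv (nth p l gone) ** gpow G y i))) as [i [k [p [Hik [HkL [Hi Hk]]]]]].
  - intros i Hi. assert (Hyi : K (gpow G y i)) by (rewrite gpow_zpow; apply sub_zpow; auto).
    destruct (Hcov _ Hyi) as [x [Hx HNx]]. destruct (In_nth l x gone Hx) as [p [Hp Hpx]].
    exists p. split; auto. rewrite Hpx. auto.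
  - exists (k - i)%nat. split. lia.
    assert (HN2 : N (ginv (ginv (nth p l gone) ** gpow G y i) ** (ginv (nth p l gone) ** gpow G y k))).
    { apply sub_mul; auto. apply sub_inv; auto. }
    rewrite ginvM, ginvK, <- gmulA, gKr in HN2.
    replace k with (i + (k - i))%nat in HN2 by lia. rewrite gpow_add, gKl in HN2. auto.
Qed.

Section Series.
Variable G : Group.
Variable Hs : nat -> subset G.
Variable m j : nat.
Hypothesis Hm : forall x, Hs m x <-> x = gone.
Hypothesis Hser : forall i, (i < m)%nat ->
       is_subgroup G (Hs i) /\ normal_in G (Hs (S i)) (Hs i) /\ cyclic_quotient G (Hs i) (Hs (S i)).
Hypothesis Hj : (j < m)%nat.
Hypothesis Hinf : infinite_quotient G (Hs j) (Hs (S j)).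
Hypothesis Hfin : forall i, (i < m)%nat -> i <> j -> ~ infinite_quotient G (Hs i) (Hs (S i)).

Lemma pow_to_j : forall d i, (i + d = j)%nat -> forall x, Hs i x -> exists n, (n >= 1)%nat /\ Hs j (gpow G x n).
Proof.
  induction d; intros i Hid x Hx.
  - exists 1%nat. split. lia. rewrite gpow_1. replace j with i by lia. auto.
  - destruct (Hser i ltac:(lia)) as [HsI [[HsS _] _]].
    destruct (fin_pow (Hs i) (Hs (S i)) HsI HsS (Hfin i ltac:(lia) ltac:(lia)) x Hx) as [n [Hn HnS]].
    destruct (IHd (S i) ltac:(lia) _ HnS) as [n' [Hn' Hj']].
    exists (n * n')%nat. split. nia. rewrite <- gpow_mul. auto.
Qed.

Lemma tor_below : forall d i, (i + d = m)%nat -> (j < i)%nat -> forall x, Hs i x -> exists n, (n >= 1)%nat /\ gpow G x n = gone.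
Proof.
  induction d; intros i Hid Hji x Hx.
  - exists 1%nat. split. lia. rewrite gpow_1. apply Hm. replace m with i by lia. auto.
  - destruct (Hser i ltac:(lia)) as [HsI [[HsS _] _]].
    destruct (fin_pow (Hs i) (Hs (S i)) HsI HsS (Hfin i ltac:(lia) ltac:(lia)) x Hx) as [n [Hn HnS]].
    destruct (IHd (S i) ltac:(lia) ltac:(lia) _ HnS) as [n' [Hn' Hj']].
    exists (n * n')%nat. split. nia. rewrite <- gpow_mul. auto.
Qed.

Lemma D_tor : forall x, Hs (S j) x -> torsion x.
Proof.
  intros x Hx. destruct (tor_below (m - S j) (S j) ltac:(lia) ltac:(lia) x Hx) as [n [Hn Hx1]].
  exists (Z.of_nat n). split. lia. rewrite <- gpow_zpow. auto.
Qed.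

Let E := Hs j.
Let D := Hs (S j).
Lemma E_sub : is_subgroup G E.
Proof. apply (Hser j Hj). Qed.
Lemma D_sub : is_subgroup G D.
Proof. apply (Hser j Hj). Qed.
Lemma D_norm : forall x g, D x -> E g -> D (conj G x g).
Proof. apply (Hser j Hj). Qed.
Lemma D_E : forall x, D x -> E x.
Proof. apply (Hser j Hj). Qed.

Lemma cyc : exists t, E t /\ forall h, E h -> exists p, D (zpow t (- p) ** h).
Proof.
  destruct (Hser j Hj) as [_ [_ [t [Ht Hc]]]]. exists t. split; auto.
  intros h Hh. destruct (Hc h Hh) as [n [Hn|Hn]].
  - exists (- Z.of_nat n). rewrite Z.opp_involutive, <- gpow_zpow. auto.
  - exists (Z.of_nat n). rewrite <- zpow_ginv, <- gpow_zpow. auto.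
Qed.

Section Cos.
Variable t : G.
Hypothesis Ht : E t.
Definition cos (p : Z) (x : G) := D (zpow t (- p) ** x).

Lemma cos_mul p q x y : cos p x -> cos q y -> cos (p + q) (x ** y).
Proof.
  unfold cos. intros Hx Hy.
  assert (Hc : D (conj G (zpow t (- p) ** x) (zpow t q))) by (apply D_norm; auto; apply sub_zpow; auto; apply E_sub).
  pose proof (sub_mul _ _ _ D_sub Hc Hy) as H.
  rewrite conj_def, <- !gmulA, (zpow_opp t q), (gKr (zpow t q)) in H.
  rewrite <- (zpow_opp t q), gmulA, gmulA, <- zpow_add in H. rewrite <- gmulA in H.
  replace (- (p + q)) with (- q + - p) by lia. auto.
Qed.

Lemma cos_inv p x : cos p x -> cos (- p) (ginv x).
Proof.
  unfold cos. intros Hx.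
  assert (Hc : D (conj G (zpow t (- p) ** x) (zpow t (- p)))) by (apply D_norm; auto; apply sub_zpow; auto; apply E_sub).
  apply (sub_inv _ _ D_sub) in Hc.
  rewrite conj_def, <- !gmulA, gKl, ginvM, <- zpow_opp in Hc. auto.
Qed.

Lemma cos_pow p x : cos p x -> forall n, cos (p * n) (zpow x n).
Proof.
  intros Hx n. induction n using Z.peano_ind.
  - unfold cos. rewrite Z.mul_0_r, zpow0, zpow0, gmul1l. apply sub_1, D_sub.
  - rewrite zpow_succ, Z.mul_succ_r. apply cos_mul; auto.
  - rewrite zpow_pred, Z.mul_pred_r. unfold Z.sub. apply cos_mul; auto. apply cos_inv; auto.
Qed.

Lemma cos0 x : cos 0 x -> D x.
Proof. unfold cos. rewrite zpow0, gmul1l. auto. Qed.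
End Cos.

Lemma t_inford : exists t, E t /\ inford t /\ forall h, E h -> exists p, cos t p h.
Proof.
  destruct cyc as [t [Ht Hc]]. exists t. split; auto. split; auto.
  intros r Hr Htr.
  set (n := Z.to_nat (Z.abs r)).
  assert (Htn : zpow t (Z.of_nat n) = gone).
  { unfold n. rewrite Z2Nat.id by lia. destruct (Z.abs_spec r) as [[_ ->]|[_ ->]]; auto.
    rewrite zpow_opp, Htr, ginv1. reflexivity. }
  destruct (Hinf (map (gpow G t) (seq 0 n))) as [h [Hh Hno]].
  { intros x Hx. apply in_map_iff in Hx. destruct Hx as [i [<- _]]. rewrite gpow_zpow. apply sub_zpow; auto. apply E_sub. }
  destruct (Hc h Hh) as [p Hp].
  set (q := p mod Z.of_nat n).
  assert (Hq : 0 <= q < Z.of_nat n) by (apply Z.mod_pos_bound; lia).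
  apply (Hno (gpow G t (Z.to_nat q))).
  - apply in_map. apply in_seq. lia.
  - rewrite gpow_zpow, Z2Nat.id by lia. rewrite <- zpow_opp.
    replace (- q) with (- p + Z.of_nat n * (p / Z.of_nat n)) by (unfold q; rewrite (Z.mod_eq p (Z.of_nat n)) by lia; lia).
    rewrite zpow_add, zpow_mul, Htn, zpow_one, gmul1r. auto.
Qed.

Lemma zpow_pair {a b : G} x y r : commute a b -> zpow (zpow a x ** zpow b y) r = zpow a (x * r) ** zpow b (y * r).
Proof. intros H. rewrite zpow_mulC by (apply commute_zpow2; auto). rewrite !zpow_mul. reflexivity. Qed.

Lemma rank1 : forall a b, Hs 0 a -> Hs 0 b -> commute a b ->
  exists p q, (p <> 0 \/ q <> 0) /\ zpow a p ** zpow b q = gone.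
Proof.
  intros a b Ha Hb Hab.
  destruct t_inford as [t [Ht [_ Hc]]].
  destruct (pow_to_j j 0 eq_refl a Ha) as [na [Hna Ha']].
  destruct (pow_to_j j 0 eq_refl b Hb) as [nb [Hnb Hb']].
  set (A := zpow a (Z.of_nat na * Z.of_nat nb)). set (B := zpow b (Z.of_nat nb * Z.of_nat na)).
  assert (HA : E A) by (unfold A; rewrite zpow_mul, <- (gpow_zpow a na); apply sub_zpow; auto; apply E_sub).
  assert (HB : E B) by (unfold B; rewrite zpow_mul, <- (gpow_zpow b nb); apply sub_zpow; auto; apply E_sub).
  destruct (Hc A HA) as [al Hal]. destruct (Hc B HB) as [be Hbe].
  destruct (classic (al = 0 /\ be = 0)) as [[-> ->]|Hne].
  - apply cos0 in Hal. destruct (D_tor A Hal) as [r [Hr HAr]].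
    exists (Z.of_nat na * Z.of_nat nb * r), 0. split. left. nia.
    rewrite zpow0, gmul1r, zpow_mul. unfold A in HAr. auto.
  - pose proof (cos_mul t Ht _ _ _ _ (cos_pow t Ht al A Hal be) (cos_pow t Ht be B Hbe (- al))) as H.
    replace (al * be + be * - al) with 0 in H by lia. apply cos0 in H.
    destruct (D_tor _ H) as [r [Hr Hr1]]. unfold A, B in Hr1.
    rewrite <- !zpow_mul, zpow_pair in Hr1 by auto.
    exists (Z.of_nat na * Z.of_nat nb * be * r), (Z.of_nat nb * Z.of_nat na * - al * r). split; [|auto].
    destruct (Z.eq_dec al 0); [left|right]; nia.
Qed.

End Series.

Lemma central_in {G : Group} (H : subset G) z : in_Yn G -> is_subgroup G H ->
  (exists a b, H a /\ H b /\ ~ commute a b) -> central z -> H z.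
Proof.
  intros HY Hs Hab Hz. apply Yuse; auto.
  - intros x Hx. rewrite conj_commute; auto. apply commute_sym, Hz.
  - intros x Hx. rewrite conj_commute; auto. apply commute_inv, commute_sym, Hz.
Qed.

Lemma least_nat (P : nat -> Prop) : (exists n, P n) -> exists n, P n /\ forall k, P k -> (n <= k)%nat.
Proof.
  intros [n Hn]. induction n as [n IH] using (well_founded_induction lt_wf).
  destruct (classic (exists k, P k /\ (k < n)%nat)) as [[k [Hk Hkn]]|Hno].
  - apply (IH k); auto.
  - exists n. split; auto. intros k Hk. destruct (Nat.lt_ge_cases k n); auto. exfalso; apply Hno; eauto.
Qed.

Lemma order_exists {G : Group} (c : G) : torsion c -> c <> gone ->
  exists o, o >= 2 /\ forall k, zpow c k = gone <-> (o | k).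
Proof.
  intros [r [Hr Hcr]] Hc1.
  destruct (least_nat (fun n => (n >= 1)%nat /\ gpow G c n = gone)) as [n [[Hn1 Hn] Hmin]].
  { exists (Z.to_nat (Z.abs r)). split. lia. rewrite gpow_zpow, Z2Nat.id by lia.
    destruct (Z.abs_spec r) as [[_ ->]|[_ ->]]; auto. rewrite zpow_opp, Hcr, ginv1. reflexivity. }
  rewrite gpow_zpow in Hn.
  assert (Hdiv : forall k, zpow c k = gone <-> (Z.of_nat n | k)).
  { intros k. split.
    - intros Hk. rewrite (Z.div_mod k (Z.of_nat n)) in Hk by lia.
      rewrite zpow_add, zpow_mul, Hn, zpow_one, gmul1l in Hk.
      assert (Hb : 0 <= k mod Z.of_nat n < Z.of_nat n) by (apply Z.mod_pos_bound; lia).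
      destruct (Z.eq_dec (k mod Z.of_nat n) 0) as [H0|H0].
      + apply Z.mod_divide; lia.
      + exfalso. assert (Hle : (n <= Z.to_nat (k mod Z.of_nat n))%nat).
        { apply Hmin. split. lia. rewrite gpow_zpow, Z2Nat.id by lia. auto. }
        lia.
    - intros [s ->]. rewrite Z.mul_comm, zpow_mul, Hn, zpow_one. reflexivity. }
  exists (Z.of_nat n). split; auto.
  destruct (Nat.eq_dec n 1) as [->|]; [|lia].
  exfalso. apply Hc1. rewrite <- (zpow1 c). apply Hdiv. exists 1. lia.
Qed.

Section Class2.
Variable G : Group.
Hypothesis HC : forall a b : G, central (comm G a b).

Lemma cm_l (a a' b : G) : comm G (a ** a') b = comm G a b ** comm G a' b.
Proof. rewrite comm_mul_l, conj_commute; auto. apply HC. Qed.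
Lemma cm_r (a b b' : G) : comm G a (b ** b') = comm G a b ** comm G a b'.
Proof. rewrite comm_mul_r, conj_commute by apply HC. apply HC. Qed.
Lemma cinv_l (a b : G) : comm G (ginv a) b = ginv (comm G a b).
Proof. apply ginv_uniq. rewrite <- cm_l, gmulVr, comm_1l. reflexivity. Qed.
Lemma cinv_r (a b : G) : comm G a (ginv b) = ginv (comm G a b).
Proof. apply ginv_uniq. rewrite <- cm_r, gmulVr, comm_1r. reflexivity. Qed.
Lemma cz_l (a b : G) k : comm G (zpow a k) b = zpow (comm G a b) k.
Proof.
  induction k using Z.peano_ind.
  - apply comm_1l.
  - rewrite !zpow_succ, cm_l, IHk. reflexivity.
  - rewrite !zpow_pred, cm_l, IHk, cinv_l. reflexivity.
Qed.
Lemma cz_r (a b : G) k : comm G a (zpow b k) = zpow (comm G a b) k.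
Proof.
  induction k using Z.peano_ind.
  - apply comm_1r.
  - rewrite !zpow_succ, cm_r, IHk. reflexivity.
  - rewrite !zpow_pred, cm_r, IHk, cinv_r. reflexivity.
Qed.

Lemma pow_formula (u v c : G) e : central c -> comm G v u = zpow c e -> forall n : nat,
  exists k, zpow (u ** v) (Z.of_nat n) = zpow u (Z.of_nat n) ** zpow v (Z.of_nat n) ** zpow c k.
Proof.
  intros Hcc Hvu. induction n.
  - exists 0. simpl. rewrite !zpow0, !gmul1l. reflexivity.
  - destruct IHn as [k Hk]. exists (e * Z.of_nat n + k).
    rewrite Nat2Z.inj_succ, !zpow_succ, Hk.
    assert (Hc : central (zpow c k)) by (intros w; apply central_zpow; auto).
    assert (Hc' : central (zpow c (e * Z.of_nat n))) by (intros w; apply central_zpow; auto).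
    assert (Hvn : zpow v (Z.of_nat n) ** u = u ** zpow v (Z.of_nat n) ** zpow c (e * Z.of_nat n)).
    { rewrite mul_comm_eq at 1. f_equal. rewrite cz_l, Hvu, zpow_mul. reflexivity. }
    rewrite zpow_add.
    rewrite <- !gmulA. f_equal.
    rewrite (gmulA _ (zpow c k) u), (Hc u), <- (gmulA _ u (zpow c k) v), (Hc v).
    rewrite (gmulA _ (zpow v (Z.of_nat n)) u), Hvn.
    rewrite <- !gmulA. rewrite (gmulA _ (zpow c (e * Z.of_nat n)) v), (Hc' v), <- gmulA. reflexivity.
Qed.
End Class2.

Lemma one_sub {G : Group} : is_subgroup G (fun x : G => x = gone).
Proof.
  split; [|split]; auto.
  - intros x y -> ->. apply gmul1l.
  - intros x ->. apply ginv1.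
Qed.

Lemma fit_of {G : Group} (N : subset G) x : is_subgroup G N -> (forall x g, N x -> N (conj G x g)) ->
  is_nilpotent G N -> N x -> fitting G x.
Proof.
  intros Hs Hn Hnil Hx. apply gen_in. exists N. split; [|split; auto].
  unfold normal_in. auto.
Qed.

Lemma abelian_nilp {G : Group} (N : subset G) : is_subgroup G N -> is_abelian G N -> is_nilpotent G N.
Proof.
  intros Hs Ha. exists 1%nat. intros x Hx. simpl in Hx.
  apply (gen_min _ _ one_sub) in Hx; auto.
  intros y [a [b [Hya [Hb ->]]]]. apply comm_eq1. apply Ha; auto.
Qed.

Lemma Gd_central {G : Group} : (forall a b : G, central (comm G a b)) -> forall x, Gd G x -> central x.
Proof. intros HC x Hx. apply (gen_min _ _ central_sub) in Hx; auto. intros y [a [b [_ [_ ->]]]]. apply HC. Qed.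

Lemma class2_nilp {G : Group} : (forall a b : G, central (comm G a b)) -> is_nilpotent G (fun _ => True).
Proof.
  intros HC. exists 2%nat. intros x Hx. simpl in Hx.
  apply (gen_min _ _ one_sub) in Hx; auto.
  intros y [a [b [Ha [_ ->]]]]. apply comm_eq1. apply (Gd_central HC a Ha).
Qed.

Lemma Gd_sub {G : Group} : is_subgroup G (Gd G).
Proof. apply gen_sub. Qed.

Lemma Gd_normal {G : Group} : forall (x g : G), Gd G x -> Gd G (conj G x g).
Proof.
  intros x g Hx. revert g. unfold Gd, commg in Hx.
  refine (gen_min _ (fun x => forall g, Gd G (conj G x g)) _ _ x Hx).
  - split; [|split].
    + intros g. rewrite conj_1. apply sub_1, Gd_sub.
    + intros a b Ha Hb g. rewrite conj_mul. apply sub_mul; auto. apply Gd_sub.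
    + intros a Ha g. rewrite conj_inv. apply sub_inv; auto. apply Gd_sub.
  - intros y [a [b [_ [_ ->]]]] g. rewrite comm_conj. apply Gd_comm.
Qed.

Lemma Gd_abelian {G : Group} : in_Yn G -> soluble G -> ~ full_group_abelian G -> is_abelian G (Gd G).
Proof.
  intros HY [n Hn] Hna. apply NNPP. intros HnA.
  assert (Hall : forall g, Gd G g).
  { intros g. apply (Pnormal (Gd G)); auto. apply Gd_sub. intros; apply Gd_normal; auto. }
  assert (Hd : forall k x, derived G k x).
  { induction k; intros x. simpl. auto. simpl.
    refine (gen_min _ _ (gen_sub _) _ x (Hall x)).
    intros y [a [b [_ [_ ->]]]]. apply gen_in. exists a, b. auto. }
  apply Hna. intros x y. rewrite (Hn x (Hd n x)), (Hn y (Hd n y)). reflexivity.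
Qed.

Lemma zpow_pair2 {G : Group} (a b : G) x y r : commute a b -> zpow (zpow a x ** zpow b y) r = zpow a (x * r) ** zpow b (y * r).
Proof. intros H. rewrite zpow_mulC by (apply commute_zpow2; auto). rewrite !zpow_mul. reflexivity. Qed.

Lemma gen2 {G : Group} (x y : G) : in_Yn G -> (forall a b : G, central (comm G a b)) -> ~ commute x y ->
  forall K, is_subgroup G K -> K x -> K y -> forall w, K w.
Proof.
  intros HY HC Hxy K HK Kx Ky w.
  set (Hg := gen G (fun w => w = x \/ w = y)).
  assert (Hs : is_subgroup G Hg) by apply gen_sub.
  assert (Hna : exists a b, Hg a /\ Hg b /\ ~ commute a b) by (exists x, y; split; [apply gen_in; auto|split; [apply gen_in; auto|auto]]).
  assert (Hall : forall g, Hg g).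
  { intros g. apply Yuse; auto.
    - intros v Hv. rewrite conj_eq_comm. apply sub_mul; auto. apply central_in; auto.
    - intros v Hv. rewrite conj_eq_comm. apply sub_mul; auto. apply central_in; auto. }
  refine (gen_min _ _ HK _ w (Hall w)). intros v [-> | ->]; auto.
Qed.

Lemma caseI {G : Group} (x y t : G) : in_Yn G -> (forall a b : G, central (comm G a b)) -> ~ commute x y ->
  inford t -> (forall a b : G, commute a b -> exists p q, (p <> 0 \/ q <> 0) /\ zpow a p ** zpow b q = gone) -> False.
Proof.
  intros HY HC Hxy Ht RK.
  pose proof (gen2 x y HY HC Hxy) as GXY.
  set (c := comm G x y).
  assert (Hc : central c) by apply HC.
  assert (Hc1 : c <> gone) by (intros H; apply Hxy; apply comm_eq1; auto).
  assert (Hct : torsion c).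
  { destruct (RK x c) as [p [q [Hpq Hpq1]]]. apply commute_sym, Hc.
    assert (E : comm G (zpow x p ** zpow c q) y = gone) by (rewrite Hpq1; apply comm_1l).
    rewrite cm_l, !cz_l in E by auto. rewrite ((proj2 (comm_eq1 c y)) (Hc y)), zpow_one, gmul1r in E.
    destruct (Z.eq_dec p 0) as [->|Hp].
    - rewrite zpow0, gmul1l in Hpq1. exists q. split; auto. lia.
    - exists p. auto. }
  destruct (order_exists c Hct Hc1) as [o [Ho Hord]].
  assert (Tcomm : forall a b, exists e, comm G a b = zpow c e).
  { assert (Sx : forall b, exists e, comm G x b = zpow c e).
    { apply GXY.
      - split; [|split].
        + exists 0. apply comm_1r.
        + intros a b [e1 E1] [e2 E2]. exists (e1 + e2). rewrite cm_r, E1, E2, zpow_add by auto. reflexivity.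
        + intros a [e1 E1]. exists (- e1). rewrite cinv_r, E1, zpow_opp by auto. reflexivity.
      - exists 0. apply comm_eq1. reflexivity.
      - exists 1. rewrite zpow1. reflexivity. }
    assert (Sy : forall b, exists e, comm G y b = zpow c e).
    { apply GXY.
      - split; [|split].
        + exists 0. apply comm_1r.
        + intros a b [e1 E1] [e2 E2]. exists (e1 + e2). rewrite cm_r, E1, E2, zpow_add by auto. reflexivity.
        + intros a [e1 E1]. exists (- e1). rewrite cinv_r, E1, zpow_opp by auto. reflexivity.
      - exists (-1). rewrite comm_sym, zpow_m1. reflexivity.
      - exists 0. apply comm_eq1. reflexivity. }
    apply (GXY (fun a => forall b, exists e, comm G a b = zpow c e)); auto. split; [|split].
    + intros b. exists 0. apply comm_1l.
    + intros a a' Ha Ha' b. destruct (Ha b) as [e1 E1]. destruct (Ha' b) as [e2 E2].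
      exists (e1 + e2). rewrite cm_l, E1, E2, zpow_add by auto. reflexivity.
    + intros a Ha b. destruct (Ha b) as [e1 E1]. exists (- e1). rewrite cinv_l, E1, zpow_opp by auto. reflexivity. }
  assert (Pcen : forall a : G, central (zpow a o)).
  { intros a w. apply comm_eq1. rewrite cz_l by auto. destruct (Tcomm a w) as [e ->].
    rewrite <- zpow_mul. apply Hord. exists e. lia. }
  set (z := zpow t o).
  assert (Hzi : inford z).
  { intros r Hr. unfold z. rewrite <- zpow_mul. apply Ht. lia. }
  destruct (RK (zpow x o) (zpow y o) (Pcen x (zpow y o))) as [p [q [Hpq HXY]]].
  set (Q := fun a b => (a <> 0 \/ b <> 0) /\ torsion (zpow x a ** zpow y b)).
  assert (Hstart : Q (o * p) (o * q)).
  { split. destruct Hpq; [left|right]; nia. exists 1. split. lia. rewrite zpow1, !zpow_mul. auto. }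
  assert (Hdesc : forall a b, Q (o * a) (o * b) -> Q a b).
  { intros a b [Hab [r [Hr Hr1]]]. split. destruct Hab; [left|right]; nia.
    destruct (Tcomm (zpow y b) (zpow x a)) as [e He].
    destruct (pow_formula G HC (zpow x a) (zpow y b) c e Hc He (Z.to_nat o)) as [k Hk].
    rewrite Z2Nat.id in Hk by lia. rewrite <- !zpow_mul in Hk.
    exists (o * (r * o)). split. nia.
    rewrite zpow_mul, Hk, zpow_mulC by (apply commute_sym; apply central_zpow; auto).
    rewrite (Z.mul_comm a o), (Z.mul_comm b o), zpow_mul, Hr1, zpow_one, gmul1l.
    rewrite <- zpow_mul. apply Hord. exists (k * r). lia. }
  assert (Hfind : forall N a b, (Z.abs_nat a + Z.abs_nat b <= N)%nat -> Q a b ->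
    exists a' b', Q a' b' /\ ~ ((o | a') /\ (o | b'))).
  { induction N; intros a b HN HQ.
    - exfalso. destruct HQ as [Hab _]. lia.
    - destruct (classic ((o | a) /\ (o | b))) as [[[s Hs] [s' Hs']]|Hnd].
      + subst a b. rewrite (Z.mul_comm s o), (Z.mul_comm s' o) in *. apply Hdesc in HQ.
        apply (IHN s s'); auto. destruct HQ as [Hss _].
        rewrite !Zabs2Nat.inj_mul in HN. destruct Hss as [Hss|Hss].
        * assert (Z.abs_nat s >= 1)%nat by lia. assert (Z.abs_nat o >= 2)%nat by lia. nia.
        * assert (Z.abs_nat s' >= 1)%nat by lia. assert (Z.abs_nat o >= 2)%nat by lia. nia.
      + exists a, b. auto. }
  destruct (Hfind _ (o * p) (o * q) (le_n _) Hstart) as [a [b [[_ [rw [Hrw Hw1]]] Hnd]]].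
  set (w := zpow x a ** zpow y b) in *.
  assert (Hwg : exists g, ~ commute w g).
  { destruct (classic (o | a)) as [Ha|Ha].
    - exists x. intros Hwx. apply comm_eq1 in Hwx. unfold w in Hwx.
      rewrite cm_l, !cz_l, ((proj2 (comm_eq1 x x)) eq_refl), zpow_one, gmul1l, comm_sym, zpow_ginv in Hwx by auto.
      apply Hord in Hwx. apply Hnd. split; auto. apply Z.divide_opp_r; auto.
    - exists y. intros Hwy. apply comm_eq1 in Hwy. unfold w in Hwy.
      rewrite cm_l, !cz_l, ((proj2 (comm_eq1 y y)) eq_refl), zpow_one, gmul1r in Hwy by auto.
      apply Hord in Hwy. auto. }
  destruct Hwg as [g Hg].
  set (M := fun m => exists i k, m = zpow w i ** zpow c k).
  assert (HMs : is_subgroup G M).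
  { split; [|split].
    - exists 0, 0. rewrite !zpow0, gmul1l. reflexivity.
    - intros m1 m2 [i [k ->]] [i' [k' ->]]. exists (i + i'), (k + k').
      rewrite !zpow_add, <- !gmulA. f_equal. rewrite (gmulA _ (zpow c k)), (central_zpow c k Hc), <- gmulA. reflexivity.
    - intros m1 [i [k ->]]. exists (- i), (- k). rewrite ginvM, !zpow_opp.
      apply commute_inv, commute_sym, commute_inv, commute_sym. apply central_zpow; auto. }
  apply (ztrick M g z w); auto.
  - intros m1 m2 [i [k ->]] [i' [k' ->]].
    apply commute_mul.
    + apply commute_sym, commute_mul. apply commute_zpow2. reflexivity. apply commute_sym, central_zpow; auto.
    + apply commute_sym, central_zpow; auto.
  - intros m1 [i [k ->]]. exists (rw * o).
    split. nia. rewrite zpow_pair2 by (apply commute_sym, Hc).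
    replace (i * (rw * o)) with (rw * (i * o)) by ring.
    rewrite zpow_mul, Hw1, zpow_one, gmul1l. apply Hord. exists (k * rw). ring.
  - assert (Hinv : forall h m, M m -> M (conj G m h)).
    { intros h m1 [i [k ->]]. destruct (Tcomm w h) as [e He].
      rewrite conj_mul, !conj_zpow, conj_eq_comm, He, (conj_commute c) by apply Hc.
      rewrite zpow_mulC by (apply commute_sym, central_zpow; auto).
      exists i, (e * i + k). rewrite <- zpow_mul, <- gmulA, <- zpow_add. reflexivity. }
    intros m1 Hm1. split; apply Hinv; auto.
  - exists 1, 0. rewrite zpow1, zpow0, gmul1r. reflexivity.
  - intros Hgw. apply Hg, commute_sym, Hgw.
  - intros v. apply Pcen.
Qed.

Lemma ginv_uniq_l {G : Group} (x y : G) : x ** y = gone -> x = ginv y.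
Proof. intros H. apply ginv_uniq in H. rewrite H, ginvK. reflexivity. Qed.

Lemma cent_r_sub {G : Group} (b : G) : is_subgroup G (fun w => central (comm G w b)).
Proof.
  split; [|split].
  - rewrite comm_1l. apply sub_1, central_sub.
  - intros w w' Hw Hw'. rewrite comm_mul_l, conj_commute by apply Hw. apply sub_mul; auto. apply central_sub.
  - intros w Hw.
    assert (E : conj G (comm G (ginv w) b) w ** comm G w b = gone) by (rewrite <- comm_mul_l, gmulVl; apply comm_1l).
    apply ginv_uniq_l in E.
    assert (E2 : comm G (ginv w) b = conj G (ginv (comm G w b)) (ginv w)) by (rewrite <- E, conjK; reflexivity).
    rewrite E2, (conj_commute (ginv (comm G w b)) (ginv w)).
    + apply sub_inv; auto. apply central_sub.
    + apply commute_inv, commute_sym, commute_inv, commute_sym, Hw.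
Qed.

Lemma cent_l_sub {G : Group} (a : G) : is_subgroup G (fun w => central (comm G a w)).
Proof.
  split; [|split].
  - rewrite comm_1r. apply sub_1, central_sub.
  - intros w w' Hw Hw'. rewrite comm_mul_r, conj_commute by apply Hw. apply sub_mul; auto. apply central_sub.
  - intros w Hw.
    assert (E : comm G a (ginv w) ** conj G (comm G a w) (ginv w) = gone) by (rewrite <- comm_mul_r, gmulVr; apply comm_1r).
    rewrite conj_commute in E by apply Hw.
    apply ginv_uniq in E. rewrite <- (ginvK (comm G a (ginv w))), <- E. apply sub_inv; auto. apply central_sub.
Qed.

Definition MGk {G : Group} (M : subset G) (h : G) (w : G) (k : Z) := exists m, M m /\ w = m ** zpow h k.

Lemma MGk_pow {G : Group} (M : subset G) (h : G) : is_subgroup G M ->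
  (forall m, M m -> M (conj G m h) /\ M (conj G m (ginv h))) ->
  forall w k, MGk M h w k -> forall n, MGk M h (zpow w n) (k * n).
Proof.
  intros Hs HM. pose proof (conj_zpow_inv M h HM) as HC.
  assert (Hmul : forall w k w' k', MGk M h w k -> MGk M h w' k' -> MGk M h (w ** w') (k + k')).
  { intros w k w' k' [m [Hm ->]] [m' [Hm' ->]]. exists (m ** conj G m' (zpow h (- k))). split.
    + apply sub_mul; auto.
    + rewrite conj_def, zpow_opp, ginvK, zpow_add, <- !gmulA, gKl. reflexivity. }
  assert (Hinv : forall w k, MGk M h w k -> MGk M h (ginv w) (- k)).
  { intros w k [m [Hm ->]]. exists (conj G (ginv m) (zpow h k)). split.
    + apply HC. apply sub_inv; auto.
    + rewrite conj_def, zpow_opp, ginvM, <- !gmulA, gmulVr, gmul1r. reflexivity. }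
  intros w k Hw n. induction n using Z.peano_ind.
  - exists gone. split. apply sub_1; auto. rewrite Z.mul_0_r, !zpow0, gmul1l. reflexivity.
  - rewrite zpow_succ, Z.mul_succ_r. apply Hmul; auto.
  - rewrite zpow_pred, Z.mul_pred_r. unfold Z.sub. apply Hmul; auto.
Qed.

Lemma MG_mul_r {G : Group} (M : subset G) (h w c : G) :
  (forall m, M m -> M (conj G m h) /\ M (conj G m (ginv h))) -> is_subgroup G M ->
  MG M h w -> M c -> MG M h (w ** c).
Proof.
  intros HM Hs [m [k [Hm ->]]] Hc. exists (m ** conj G c (zpow h (- k))), k. split.
  - apply sub_mul; auto. apply (conj_zpow_inv M h HM); auto.
  - rewrite conj_def, zpow_opp, ginvK, <- !gmulA, gmulVl, gmul1r. reflexivity.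
Qed.

Lemma conj_eq1 {G : Group} (x g : G) : conj G x g = gone -> x = gone.
Proof. intros H. rewrite <- (conjK x g), H, conj_1. reflexivity. Qed.

Lemma caseII {G : Group} (a0 g t : G) : in_Yn G -> is_abelian G (Gd G) -> Gd G a0 -> ~ commute a0 g -> inford t ->
  (forall a b, fitting G a -> fitting G b -> commute a b -> exists p q, (p <> 0 \/ q <> 0) /\ zpow a p ** zpow b q = gone) -> False.
Proof.
  intros HY GdA Ha0 Ha0g Ht RK.
  set (C := fun w : G => forall a, Gd G a -> commute w a).
  assert (HCs : is_subgroup G C).
  { split; [|split].
    - intros a _. unfold commute. rewrite gmul1l, gmul1r. reflexivity.
    - intros w w' Hw Hw' a Ha. apply commute_sym, commute_mul; apply commute_sym; auto.
    - intros w Hw a Ha. apply commute_sym, commute_inv, commute_sym; auto. }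
  assert (HCn : forall w h, C w -> C (conj G w h)).
  { intros w h Hw a Ha. unfold commute.
    rewrite <- (conjKV a h) at 1 2. rewrite <- !conj_mul. f_equal. apply Hw. apply Gd_normal; auto. }
  assert (HGdC : forall a, Gd G a -> C a) by (intros a Ha b Hb; apply GdA; auto).
  assert (Hg : ~ C g) by (intros H; apply Ha0g, commute_sym, H; auto).
  assert (HCa : is_abelian G C).
  { apply NNPP. intros Hna. apply Hg. apply Pnormal; auto. }
  assert (HCf : forall w, C w -> fitting G w) by (intros w Hw; apply (fit_of C); auto; apply abelian_nilp; auto).
  assert (HCinv : forall h m, C m -> C (conj G m h) /\ C (conj G m (ginv h))) by (intros; split; apply HCn; auto).
  assert (all_MG : forall h, ~ C h -> forall w, MG C h w).
  { intros h Hh w. apply Yuse; auto.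
    - apply MG_sub; auto.
    - unfold C in Hh. apply not_all_ex_not in Hh. destruct Hh as [a Ha].
      apply imply_to_and in Ha. destruct Ha as [Ha Hha].
      exists a, h. split; [|split].
      + exists a, 0. split. apply HGdC; auto. rewrite zpow0, gmul1r. reflexivity.
      + exists gone, 1. split. apply sub_1; auto. rewrite zpow1, gmul1l. reflexivity.
      + intros Hc. apply Hha, commute_sym, Hc.
    - intros x Hx. rewrite conj_eq_comm. apply MG_mul_r; auto. apply HGdC, Gd_comm.
    - intros x Hx. rewrite conj_eq_comm. apply MG_mul_r; auto. apply HGdC, Gd_comm. }
  assert (Hs : exists sn : nat, (sn >= 1)%nat /\ C (zpow g (Z.of_nat sn))).
  { destruct (classic (C (zpow g 2))) as [H2|H2].
    - exists 2%nat. split; auto.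
    - destruct (all_MG _ H2 g) as [m [k [Hm Hgm]]].
      assert (Hm' : m = zpow g (1 - 2 * k)).
      { apply (gcancr (zpow (zpow g 2) k)). rewrite <- Hgm, <- zpow_mul, <- zpow_add, <- (zpow1 g) at 1. f_equal. lia. }
      exists (Z.to_nat (Z.abs (1 - 2 * k))). split. lia.
      rewrite Z2Nat.id by lia. destruct (Z.abs_spec (1 - 2 * k)) as [[_ ->]|[_ ->]].
      + rewrite <- Hm'. auto.
      + rewrite zpow_opp, <- Hm'. apply sub_inv; auto. }
  destruct Hs as [sn [Hsn HgsC]]. set (ss := Z.of_nat sn) in *.
  destruct (all_MG g Hg t) as [m0 [k0 [Hm0 Ht0]]].
  set (u := zpow t ss).
  assert (HuC : C u).
  { destruct (MGk_pow C g HCs (HCinv g) t k0 (ex_intro _ m0 (Logic.conj Hm0 Ht0)) ss) as [m [Hm Hu]].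
    unfold u. rewrite Hu, Z.mul_comm, zpow_mul. apply sub_mul; auto. apply sub_zpow; auto. }
  assert (Hui : inford u) by (intros r Hr; unfold u; rewrite <- zpow_mul; apply Ht; lia).
  assert (HsuC : C (conj G u g)) by (apply HCn; auto).
  destruct (RK u (conj G u g) (HCf _ HuC) (HCf _ HsuC) (HCa _ _ HuC HsuC)) as [p [q [Hpq Hpq1]]].
  assert (Hq : q <> 0).
  { intros ->. rewrite zpow0, gmul1r in Hpq1. destruct Hpq; [|lia]. apply (Hui p); auto. }
  assert (Hp : p <> 0).
  { intros ->. rewrite zpow0, gmul1l, <- conj_zpow in Hpq1. apply conj_eq1 in Hpq1. apply (Hui q); auto. }
  assert (Hab : zpow (conj G u g) q = zpow u (- p)).
  { rewrite zpow_opp. apply ginv_uniq. auto. }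
  set (a := q) in *. set (b := - p) in *.
  assert (Hit : forall n : nat, zpow (conj G u (zpow g (Z.of_nat n))) (a ^ Z.of_nat n) = zpow u (b ^ Z.of_nat n)).
  { induction n.
    - simpl. rewrite zpow0, conj_g1. reflexivity.
    - rewrite Nat2Z.inj_succ, !Z.pow_succ_r by lia.
      rewrite <- Z.add_1_l, zpow_add, zpow1, <- conj_conj.
      rewrite zpow_mul, <- conj_zpow, Hab, conj_zpow, <- zpow_mul, Z.mul_comm, zpow_mul, IHn, <- zpow_mul.
      f_equal. lia. }
  specialize (Hit sn). fold ss in Hit.
  rewrite conj_commute in Hit by (apply HCa; auto).
  apply inford_eq in Hit; auto.
  assert (Habs : Z.abs a = Z.abs b).
  { apply (Z.pow_inj_l _ _ ss); try lia. rewrite <- !Z.abs_pow, Hit. reflexivity. }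
  set (v := zpow u a).
  assert (Hvi : inford v) by (intros r Hr; unfold v; rewrite <- zpow_mul; apply Hui; unfold a; nia).
  assert (HvC : C v) by (apply sub_zpow; auto).
  assert (Hv : conj G v g = zpow u b) by (unfold v; rewrite conj_zpow; auto).
  assert (Eab : b = a \/ b = - a) by lia.
  destruct Eab as [Eab|Eab].
  2:{ rewrite Eab, zpow_opp in Hv. apply (L1 g v HY); auto. }
  rewrite Eab in Hv. fold v in Hv.
  assert (Hvg : commute v g) by (apply conj_eq_commute; auto).
  assert (Hvc : central v).
  { intros w. destruct (all_MG g Hg w) as [m [k [Hm ->]]]. apply commute_mul. apply HCa; auto. apply commute_zpow; auto. }
  set (M := fun x => exists c, C c /\ x = comm G c g).
  assert (HcommC : forall c, C c -> C (comm G c g)).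
  { intros c Hc. rewrite comm_def, <- gmulA, <- conj_def. apply sub_mul; auto. apply sub_inv; auto. }
  assert (Hcm : forall c c', C c -> C c' -> comm G (c ** c') g = comm G c g ** comm G c' g).
  { intros c c' Hc Hc'. rewrite comm_mul_l, conj_commute; auto. apply HCa; auto. }
  assert (HMs : is_subgroup G M).
  { split; [|split].
    - exists gone. split. apply sub_1; auto. symmetry; apply comm_1l.
    - intros x y [c [Hc ->]] [c' [Hc' ->]]. exists (c ** c'). split. apply sub_mul; auto. rewrite Hcm; auto.
    - intros x [c [Hc ->]]. exists (ginv c). split. apply sub_inv; auto.
      symmetry. apply ginv_uniq_l. rewrite <- Hcm, gmulVl, comm_1l; auto. apply sub_inv; auto. }
  destruct (classic (exists c, C c /\ ~ commute g (comm G c g))) as [[c [Hc Hgc]]|Hno].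
  - refine (ztrick M g v (comm G c g) HY HMs _ _ _ _ Hgc Hvc Hvi).
    + intros x y [c1 [Hc1 ->]] [c2 [Hc2 ->]]. apply HCa; auto.
    + intros x [c1 [Hc1 ->]].
      destruct (RK c1 v (HCf _ Hc1) (HCf _ HvC) (HCa _ _ Hc1 HvC)) as [p' [q' [Hpq' E1]]].
      assert (Hp' : p' <> 0).
      { intros ->. rewrite zpow0, gmul1l in E1. destruct Hpq'; [lia|]. apply (Hvi q'); auto. }
      exists p'. split; auto.
      assert (E2 : zpow (conj G c1 g) p' ** zpow v q' = gone).
      { rewrite <- Hv at 1. rewrite <- !conj_zpow, <- conj_mul, E1. apply conj_1. }
      apply ginv_uniq_l in E1. apply ginv_uniq_l in E2.
      rewrite comm_def, <- gmulA, <- conj_def, zpow_mulC, zpow_ginv, E2, <- E1, <- zpow_add.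
      rewrite Z.add_opp_diag_l. reflexivity.
      apply HCa. apply sub_inv; auto. apply HCn; auto.
    + intros x [c1 [Hc1 ->]]. split.
      * exists (conj G c1 g). split. apply HCn; auto. rewrite comm_conj, (conj_commute g g); auto. reflexivity.
      * exists (conj G c1 (ginv g)). split. apply HCn; auto. rewrite comm_conj, (conj_commute g (ginv g)); auto.
        apply commute_inv. reflexivity.
    + exists c. auto.
  - assert (Hno' : forall c, C c -> commute g (comm G c g)).
    { intros c Hc. apply NNPP. intros H. apply Hno. exists c. auto. }
    assert (KCg : forall K, is_subgroup G K -> (forall c, C c -> K c) -> K g -> forall w, K w).
    { intros K HK HKC HKg w. destruct (all_MG g Hg w) as [m [k [Hm ->]]]. apply sub_mul; auto. apply sub_zpow; auto. }
    assert (Hcen1 : forall c, C c -> central (comm G c g)).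
    { intros c Hc w. revert w. apply (KCg (fun w => commute (comm G c g) w)). apply centralizer_sub.
      intros c' Hc'. apply HCa; auto. apply commute_sym, Hno'; auto. }
    assert (S1 : forall c, C c -> forall w, central (comm G c w)).
    { intros c Hc. apply (KCg (fun w => central (comm G c w))). apply cent_l_sub.
      - intros c' Hc'. rewrite ((proj2 (comm_eq1 c c')) (HCa _ _ Hc Hc')). apply sub_1, central_sub.
      - apply Hcen1; auto. }
    assert (S2 : forall w, central (comm G g w)).
    { apply (KCg (fun w => central (comm G g w))). apply cent_l_sub.
      - intros c' Hc'. rewrite comm_sym. apply sub_inv. apply central_sub. apply Hcen1; auto.
      - rewrite ((proj2 (comm_eq1 g g)) eq_refl). apply sub_1, central_sub. }
    assert (S3 : forall w w', central (comm G w w')).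
    { intros w w'. revert w. apply (KCg (fun w => central (comm G w w'))). apply cent_r_sub.
      - intros c Hc. apply S1; auto.
      - apply S2. }
    apply Ha0g. apply (Gd_central S3 a0 Ha0).
Qed.

Theorem lemma3p1 (G : Group) :
  in_Yn G -> infinite_group G -> fin_generated G -> soluble G ->
  hirsch_length_one G (fitting G) ->
  full_group_abelian G.
Proof.
  intros HY _ _ Hsol [Hs [m [H0 [Hm [Hser [j [Hj [Hinf Hfin]]]]]]]].
  apply NNPP. intros Hna.
  destruct (t_inford G Hs m j Hser Hj Hinf) as [t [_ [Ht _]]].
  assert (RK : forall a b, fitting G a -> fitting G b -> commute a b ->
            exists p q, (p <> 0 \/ q <> 0) /\ zpow a p ** zpow b q = gone).
  { intros a b Ha Hb Hab. apply (rank1 G Hs m j Hm Hser Hj Hinf Hfin); auto; apply H0; auto. }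
  pose proof (Gd_abelian HY Hsol Hna) as GdA.
  destruct (classic (forall a, Gd G a -> central a)) as [Hcen|Hncen].
  - assert (HC : forall a b : G, central (comm G a b)) by (intros; apply Hcen, Gd_comm).
    assert (Hfit : forall w, fitting G w).
    { intros w. apply (fit_of (fun _ => True)); auto.
      - split; auto.
      - apply class2_nilp; auto. }
    assert (Hxy : exists x y : G, ~ commute x y).
    { apply NNPP. intros H. apply Hna. intros x y. apply NNPP. intros H'. apply H. exists x, y. auto. }
    destruct Hxy as [x [y Hxy]].
    apply (caseI x y t HY HC Hxy Ht). intros a b Hab. apply RK; auto.
  - apply not_all_ex_not in Hncen. destruct Hncen as [a0 Ha0].
    apply imply_to_and in Ha0. destruct Ha0 as [Ha0 Hnc].
    apply not_all_ex_not in Hnc. destruct Hnc as [g Hg].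
    apply (caseII a0 g t HY GdA Ha0 Hg Ht RK).
Qed.
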